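(* Let $n$ be a power of two and let $\mathcal{C}'$ be as in the context (for any fixed $s_0,s_1,s_2$). Then there exists a code $\mathcal{C}\subseteq\mathcal{C}'$ with $|\mathcal{C}|\ge |\mathcal{C}'|/m^{10}$ such that for any $x,x'\in\mathcal{C}$, either $H_x=H_{x'}$ or $|H_x\triangle H_{x'}|\ge 10$.
   Context: Logarithms are base $2$. Set $\Delta=50+1000\log n$ and $m=1000\Delta^2$. For $x\in\{0,1\}^n$ ending in $0011$, the marker segmentation is $x=z^x_1\|\cdots\|z^x_{\ell_x}$ where each $z^x_j$ ends with $0011$ and contains exactly one occurrence of $0011$. Let $h:\{0,1\}^{\le 3\Delta}\to\{0,\dots,m-1\}$ be a fixed function such that $h(z)\ne h(z')$ whenever $z'\ne z$ is obtained from $z$ by at most two adjacent transpositions, at most two substitutions, or at most one deletion and one insertion. Define $f(x)=\sum_{j=1}^{\ell_x} j(|z^x_j|\cdot m+h(z^x_j)) \bmod (10n\Delta m+1)$, $g_1(x)=\ell_x \bmod 5$, $g_2(x)=\sum_{i=1}^n\overline{x}_i \bmod 3$ with $\overline{x}_i=\sum_{j\le i}x_j \bmod 2$, and $\mathcal{C}'=\{x\in\{0,1\}^n:(x_{n-3},\dots,x_n)=(0,0,1,1), f(x)=s_0, g_1(x)=s_1, g_2(x)=s_2, |z^x_j|\le\Delta\ \forall j\}$. The hash multiset is $H_x=\{\{h(z^x_1),\dots,h(z^x_{\ell_x})\}\}$, and for multisets $|S\triangle T|=\sum_v|\mathrm{mult}_S(v)-\mathrm{mult}_T(v)|$. *)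

(* Defs.v *)
From mathcomp Require Import all_boot.
Set Implicit Arguments. Unset Strict Implicit. Unset Printing Implicit Defensive.

Definition marker : seq bool := [:: false; false; true; true].

Definition ends_marker (c : seq bool) : bool :=
  (3 < size c) && (drop (size c - 4) c == marker).

(* Marker segmentation: cut right after each occurrence of 0011
   (0011 cannot overlap itself, so this is the unique segmentation into
   pieces ending with 0011 and containing exactly one occurrence of it,
   whenever x ends with 0011). *)
Fixpoint seg_aux (cur s : seq bool) : seq (seq bool) :=
  match s with
  | [::] => if cur is [::] then [::] else [:: cur]
  | b :: s' => let c := rcons cur b in
               if ends_marker c then c :: seg_aux [::] s' else seg_aux c s'
  end.

Definition segs (x : seq bool) : seq (seq bool) := seg_aux [::] x.

(* log base 2 of n (exact when n is a power of two). *)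
Definition Delta (n : nat) : nat := 50 + 1000 * trunc_log 2 n.
Definition mm (n : nat) : nat := 1000 * (Delta n) ^ 2.

Definition adj_transp (z z' : seq bool) : Prop :=
  exists a b c d, z = a ++ [:: b; c] ++ d /\ z' = a ++ [:: c; b] ++ d.
Definition subst1 (z z' : seq bool) : Prop :=
  exists a b b' d, z = a ++ b :: d /\ z' = a ++ b' :: d.
Definition del1 (z z' : seq bool) : Prop :=
  exists a b d, z = a ++ b :: d /\ z' = a ++ d.
Definition ins1 (z z' : seq bool) : Prop := del1 z' z.

Definition le2 (R : seq bool -> seq bool -> Prop) (z z' : seq bool) : Prop :=
  z' = z \/ R z z' \/ exists y, R z y /\ R y z'.

Definition del_ins (z z' : seq bool) : Prop :=
  exists y, (y = z \/ del1 z y) /\ (z' = y \/ ins1 y z').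

Definition close_edit (z z' : seq bool) : Prop :=
  le2 adj_transp z z' \/ le2 subst1 z z' \/ del_ins z z'.

Definition good_hash (n : nat) (h : seq bool -> nat) : Prop :=
  (forall z, size z <= 3 * Delta n -> h z < mm n) /\
  (forall z z', size z <= 3 * Delta n -> size z' <= 3 * Delta n ->
     z' <> z -> close_edit z z' -> h z <> h z').

Definition f_val (n : nat) (h : seq bool -> nat) (x : seq bool) : nat :=
  (\sum_(j < size (segs x))
     j.+1 * (size (nth [::] (segs x) j) * mm n + h (nth [::] (segs x) j)))
  %% (10 * n * Delta n * mm n + 1).

Definition g1 (x : seq bool) : nat := size (segs x) %% 5.

Definition g2 (x : seq bool) : nat :=
  (\sum_(i < size x) ((\sum_(j < i.+1) nth false x j) %% 2)) %% 3.

Definition Cprime (n : nat) (h : seq bool -> nat) (s0 s1 s2 : nat)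
  : {set n.-tuple bool} :=
  [set x : n.-tuple bool |
     [&& drop (n - 4) x == marker, 3 < n,
         f_val n h x == s0, g1 x == s1, g2 x == s2 &
         all (fun z => size z <= Delta n) (segs x)]].

(* hash multiset H_x, represented as a sequence up to permutation *)
Definition Hms (h : seq bool -> nat) (x : seq bool) : seq nat := map h (segs x).

(* |S triangle T| = sum_v |mult_S v - mult_T v| *)
Definition msdist (s t : seq nat) : nat :=
  \sum_(v <- undup (s ++ t)) ((count_mem v s - count_mem v t) + (count_mem v t - count_mem v s)).

(* Main.v *)
Require Import Defs.
From mathcomp Require Import all_boot.
From mathcomp Require Import all_algebra all_field.
From mathcomp Require Import zify.
Import GRing.Theory.
Local Open Scope ring_scope.

Lemma sum_count_seq (F : nzRingType) (g : nat -> F) (A U : seq nat) :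
  uniq U -> {subset A <= U} ->
  \sum_(a <- A) g a = \sum_(v <- U) (count_mem v A)%:R * g v.
Proof.
move=> uU; elim: A => [|a A IH] sub.
  by rewrite big_nil big1 // => v _; rewrite mul0r.
rewrite big_cons IH; last by move=> x xA; apply: sub; rewrite inE xA orbT.
have aU : a \in U by apply: sub; rewrite inE eqxx.
rewrite [in RHS](eq_bigr (fun v => (a == v)%:R * g v + (count_mem v A)%:R * g v)); last first.
  by move=> v _; rewrite /= natrD mulrDl.
rewrite big_split /=; congr (_ + _).
rewrite (bigD1_seq a) //= eqxx mul1r big1 ?addr0 // => v /negbTE; rewrite eq_sym => ->.
by rewrite mul0r.
Qed.

Lemma key (F : fieldType) (phi : nat -> F) (m : nat) (A B : seq nat) :
  (11 \in [pchar F])%N ->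
  (forall u v, (u < m)%N -> (v < m)%N -> phi u = phi v -> u = v) ->
  all (fun a => a < m)%N A -> all (fun a => a < m)%N B ->
  (forall i : 'I_9, \sum_(a <- A) phi a ^+ i = \sum_(b <- B) phi b ^+ i) ->
  perm_eq A B \/ (10 <= msdist A B)%N.
Proof.
move=> chF phiI Am Bm Hs.
case: (leqP 10 (msdist A B)) => [|Hlt]; [by right|left].
apply/allP => v0 Hv0; apply/negPn/negP => Hne.
set U := undup (A ++ B).
have uU : uniq U by apply: undup_uniq.
have v0U : v0 \in U by rewrite mem_undup.
have Ulm : forall v, v \in U -> (v < m)%N.
  move=> v; rewrite mem_undup mem_cat => /orP[] vin.
    by move/allP: Am => /(_ v vin).
  by move/allP: Bm => /(_ v vin).
pose cA v := count_mem v A; pose cB v := count_mem v B.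
pose t v := ((cA v - cB v) + (cB v - cA v))%N.
have msE : msdist A B = (\sum_(v <- U) t v)%N by [].
have tv0 : (t v0 <= 9)%N.
  have : (t v0 <= msdist A B)%N by rewrite msE (bigD1_seq v0) //= leq_addr.
  lia.
have Dv0 : (cA v0)%:R - (cB v0)%:R != 0 :> F.
  rewrite subr_eq0; apply/eqP => E.
  have key2 : forall a b, (a < b)%N -> (b - a <= 9)%N -> a%:R = b%:R :> F -> False.
    move=> a b ab ba E2.
    have : (11 %| b - a)%N by rewrite (dvdn_pcharf chF) natrB ?(ltnW ab) // E2 subrr.
    move/dvdn_leq; lia.
  have : cA v0 <> cB v0 by move/eqP: Hne.
  case: (ltngtP (cA v0) (cB v0)) => [ab|ab|ab] neq.
  - by apply: (key2 _ _ ab) => //; rewrite /t in tv0; lia.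
  - by apply: (key2 _ _ ab); [rewrite /t in tv0; lia | rewrite E].
  - by [].
set S := [seq v <- U | cA v != cB v].
have sS : (size S <= 9)%N.
  have : (size S <= msdist A B)%N.
    rewrite size_filter -sum1_count msE big_mkcond /=. apply: leq_sum => v _.
    rewrite /t; case: (cA v =P cB v) => [->|ne] /=; [lia|]. move: ne; lia.
  lia.
have v0S : v0 \in S by rewrite mem_filter Hne v0U.
set S' := [seq phi w | w <- S & w != v0].
set r := \prod_(a <- S') ('X - a%:P).
have sr : (size r <= 9)%N.
  rewrite size_prod_XsubC size_map size_filter.
  have := count_predC (fun w : nat => w != v0) S.
  have : (0 < count (predC (fun w : nat => w != v0)) S)%N.
    rewrite -has_count; apply/hasP; exists v0 => //=; by rewrite eqxx.
  move=> h1 h2; apply: (leq_trans _ sS); rewrite -h2 -[X in (X < _)%N]addn0 ltn_add2l; exact: h1.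
pose D v := (cA v)%:R - (cB v)%:R : F.
have H6 : forall i : 'I_9, \sum_(v <- U) D v * phi v ^+ i = 0.
  move=> i; rewrite (eq_bigr (fun v => (cA v)%:R * phi v ^+ i - (cB v)%:R * phi v ^+ i)); last first.
    by move=> v _; rewrite /D mulrBl.
  rewrite sumrB -!(sum_count_seq _ (fun v => phi v ^+ i)) // ?Hs ?subrr //.
    by move=> x xB; rewrite mem_undup mem_cat xB orbT.
  by move=> x xA; rewrite mem_undup mem_cat xA.
have H7 : \sum_(v <- U) D v * r.[phi v] = 0.
  rewrite (eq_bigr (fun v => \sum_(i < 9) r`_i * (D v * phi v ^+ i))); last first.
    move=> v _; rewrite (horner_coef_wide _ sr) mulr_sumr; apply: eq_bigr => i _.
    by rewrite mulrCA.
  rewrite exchange_big /= big1 // => i _; by rewrite -mulr_sumr H6 mulr0.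
have H8 : \sum_(v <- U) D v * r.[phi v] = D v0 * r.[phi v0].
  rewrite (bigD1_seq v0) //= big1_seq ?addr0 // => v /andP[vn vU].
  case: (boolP (cA v == cB v)) => [/eqP E|ne]; first by rewrite /D /cA /cB -/(cA v) -/(cB v) E subrr mul0r.
  have : root r (phi v).
    rewrite root_prod_XsubC; apply/mapP; exists v => //.
    by rewrite mem_filter vn mem_filter ne vU.
  by move/rootP ->; rewrite mulr0.
have H9 : r.[phi v0] != 0.
  apply/negP => /rootP/eqP; rewrite -/(root r _) root_prod_XsubC => /mapP[w].
  rewrite mem_filter => /andP[wn wS] E.
  have wU : w \in U by move: wS; rewrite mem_filter => /andP[].
  by move: wn; rewrite (phiI _ _ (Ulm _ v0U) (Ulm _ wU) E) eqxx.
by move: (mulf_neq0 Dv0 H9); rewrite -H8 H7 eqxx.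
Qed.

Local Close Scope ring_scope.

Lemma big_const_ineq : 11 ^ 9 <= 1000 * (2050 * 2050).
Proof. rewrite !expnS expn0. lia. Qed.

Theorem lemma8 (n k : nat) (hn : n = 2 ^ k) (h : seq bool -> nat)
  (hh : good_hash n h) (s0 s1 s2 : nat) :
  exists C : {set n.-tuple bool},
    C \subset Cprime n h s0 s1 s2 /\
    #|Cprime n h s0 s1 s2| <= #|C| * mm n ^ 10 /\
    (forall x x' : n.-tuple bool, x \in C -> x' \in C ->
       perm_eq (Hms h x) (Hms h x') \/ 10 <= msdist (Hms h x) (Hms h x')).
Proof.
case: (boolP (Cprime n h s0 s1 s2 == set0)) => [/eqP E | ne].
  exists set0; rewrite E sub0set cards0; split=>//; split=>//.
  by move=> x x'; rewrite inE.
have [x0 x0C] := set0Pn _ ne.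
have n4 : 3 < n by move: x0C; rewrite inE => /andP[_ /andP[? _]].
have k2 : 2 <= k by move: n4; rewrite hn; case: (k) => [|[|kk]].
have Dge : 2050 <= Delta n by rewrite /Delta hn trunc_expnK //; lia.
set M := mm n.
have M9 : 11 ^ 9 <= M.
  apply: (leq_trans big_const_ineq); rewrite /M /mm expnS expn1.
  by apply: leq_mul => //; apply: leq_mul.
set t := (trunc_log 11 M).+1.
have [F chF cF] := @pPrimePowerField 11 t isT isT.
have Mq : M < 11 ^ t by apply: trunc_log_ltn.
have q9 : (11 ^ t) ^ 9 <= M ^ 10.
  have M0 : 0 < M by apply: leq_trans M9; rewrite expn_gt0.
  have : 11 ^ t <= 11 * M by rewrite /t expnS leq_mul // trunc_logP.
  rewrite -(leq_exp2r _ _ (isT : 0 < 9)) expnMn => H.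
  apply: (leq_trans H); by rewrite (expnS M 9) leq_mul2r M9 orbT.
pose phi v := nth (0 : F)%R (enum F) v.
have phiI : forall u v, u < M -> v < M -> phi u = phi v -> u = v.
  move=> u v uM vM E.
  have sz : size (enum F) = 11 ^ t by rewrite -cardT cF.
  apply/eqP; rewrite -(@nth_uniq _ (0 : F)%R (enum F) u v) ?sz ?enum_uniq //.
  - by apply/eqP.
  - exact: leq_trans uM (ltnW Mq).
  - exact: leq_trans vM (ltnW Mq).
pose syn (x : n.-tuple bool) : {ffun 'I_9 -> F} :=
  [ffun i : 'I_9 => (\sum_(a <- Hms h x) phi a ^+ i)%R].
pose cls s := [set x in Cprime n h s0 s1 s2 | syn x == s].
case: (@arg_maxnP _ ([ffun=> 0%R] : {ffun 'I_9 -> F}) predT (fun s => #|cls s|)) => // s _ smax.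
exists [set x in Cprime n h s0 s1 s2 | syn x == s]; split.
  by apply/subsetP => x; rewrite inE => /andP[].
split.
  have -> : #|Cprime n h s0 s1 s2| = \sum_(j : {ffun 'I_9 -> F}) #|cls j|.
    rewrite -sum1_card (partition_big syn predT) //=; apply: eq_bigr => j _.
    rewrite /cls -sum1_card; apply: eq_bigl => x; by rewrite inE.
  apply: (@leq_trans (\sum_(j : {ffun 'I_9 -> F}) #|cls s|)).
    by apply: leq_sum => j _; apply: smax.
  rewrite sum_nat_const card_ffun card_ord cF mulnC leq_mul //.
have hmM : forall x : n.-tuple bool, x \in Cprime n h s0 s1 s2 -> all (fun a => a < M) (Hms h x).
  move=> x; rewrite inE => /andP[_ /andP[_ /andP[_ /andP[_ /andP[_ /allP al]]]]].
  rewrite /Hms all_map; apply/allP => z zin /=.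
  apply: hh.1; apply: leq_trans (al z zin) _; lia.
move=> x x'; rewrite !inE => /andP[xC /eqP sx] /andP[x'C /eqP sx'].
apply: (@key F phi M) => //; [by apply: hmM; rewrite inE | by apply: hmM; rewrite inE |].
move=> i; have E : syn x = syn x' by rewrite sx sx'.
by have := congr1 (fun f : {ffun 'I_9 -> F} => f i) E; rewrite /syn /= !ffunE.
Qed.
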